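(* Let $A=A^\top\in\mathbb{R}^{3\times3}$ be positive definite, $u\in\mathbb{S}^2$, and $\gamma>0$. Let $\mathcal{T}(R,\theta)=R\,\mathcal{R}_a(\theta,u)$ and $$U(R,\theta)=\mathrm{tr}\big(A(I_3-\mathcal{T}(R,\theta))\big)+\tfrac{\gamma}{2}\theta^2 .$$ Consider trajectories generated by $\dot R=R\omega^\times$ and $\dot\theta=v$ with $R(0)\in SO(3)$, $\theta(0)\in\mathbb{R}$, $\omega\in\mathbb{R}^3$, $v\in\mathbb{R}$. Then for all $(R,\theta)\in SO(3)\times\mathbb{R}$: 1. $\dot{\mathcal{T}}(R,\theta)=\mathcal{T}(R,\theta)\big(\mathcal{R}_a(\theta,u)^\top\omega+vu\big)^\times$; 2. $\psi(R^\top\nabla_RU(R,\theta))=\mathcal{R}_a(\theta,u)\,\psi(A\mathcal{T}(R,\theta))$; 3. $\nabla_\theta U(R,\theta)=\gamma\theta+2u^\top\psi(A\mathcal{T}(R,\theta))$; 4. the critical set of $U$ is $\Psi_U=\Psi_V\times\{0\}$, and in particular $(I_3,0)\in\Psi_U$; 5. $\tfrac{d}{dt}\psi(R^\top\nabla_RU(R,\theta))=\mathcal{D}_R(R,\theta)\,\omega+\mathcal{D}_\theta(R,\theta)\,v$, where $$\mathcal{D}_R(R,\theta)=\mathcal{R}_a(\theta,u)\,E(A\mathcal{T}(R,\theta))\,\mathcal{R}_a(\theta,u)^\top,$$ $$\mathcal{D}_\theta(R,\theta)=\mathcal{R}_a(\theta,u)\,E(A\mathcal{T}(R,\theta))\,u-\big(\mathcal{R}_a(\theta,u)\,\psi(A\mathcal{T}(R,\theta))\big)^\times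 u,$$ and $E(B)=\tfrac12(\mathrm{tr}(B)I_3-B^\top)$ for $B\in\mathbb{R}^{3\times3}$.
   Context: Notation. - $\mathcal{R}_a(\theta,u)=I_3+\sin\theta\,u^\times+(1-\cos\theta)(u^\times)^2$ is the rotation by angle $\theta$ about the unit axis $u$. - $x^\times$ is the skew-symmetric matrix with $x^\times y=x\times y$. - For $B=[b_{ij}]$, $\psi(B)=\tfrac12[b_{32}-b_{23},b_{13}-b_{31},b_{21}-b_{12}]^\top$. - $\nabla_RU(R,\theta)\in T_RSO(3)=\{R\Omega:\Omega^\top=-\Omega\}$ is the gradient in $R$ with respect to the metric $\langle R\Omega_1,R\Omega_2\rangle_R=\mathrm{tr}(\Omega_1^\top\Omega_2)$, and $\nabla_\theta U$ is the partial derivative in $\theta$. - The critical set is $\Psi_U=\{(R,\theta):\nabla_RU(R,\theta)=0,\ \nabla_\theta U(R,\theta)=0\}$. - $\Psi_V=\{I_3\}\cup\{\mathcal{R}_a(\pi,w):w\in\mathcal{E}(A)\}$, where $\mathcal{E}(A)$ is the set of all unit eigenvectors of $A$. *)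

(* Defs.v *)
From HB Require Import structures.
From mathcomp Require Import all_boot all_order all_algebra.
From mathcomp Require Import all_classical all_reals all_analysis.
Set Implicit Arguments. Unset Strict Implicit. Unset Printing Implicit Defensive.
Import Order.TTheory GRing.Theory Num.Theory.
Import numFieldNormedType.Exports.
Local Open Scope ring_scope.
Local Open Scope classical_set_scope.

Section Defs.
Variable R : realType.

Definition vc (x : 'cV[R]_3) (k : nat) : R := x (@inord 2 k) 0.
Definition mc (B : 'M[R]_3) (i j : nat) : R := B (@inord 2 i) (@inord 2 j).

(* x^\times : the crossm-symmetric matrix with x^\times y = x \times y *)
Definition crossm (x : 'cV[R]_3) : 'M[R]_3 :=
  \matrix_(i < 3, j < 3)
    match nat_of_ord i, nat_of_ord j with
    | 0, 1 => - vc x 2 | 0, 2 => vc x 1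
    | 1, 0 => vc x 2   | 1, 2 => - vc x 0
    | 2, 0 => - vc x 1 | 2, 1 => vc x 0
    | _, _ => 0
    end.

Definition psi (B : 'M[R]_3) : 'cV[R]_3 :=
  \col_(i < 3)
    match nat_of_ord i with
    | 0 => 2^-1 * (mc B 2 1 - mc B 1 2)
    | 1 => 2^-1 * (mc B 0 2 - mc B 2 0)
    | _ => 2^-1 * (mc B 1 0 - mc B 0 1)
    end.

(* Rodrigues formula R_a(theta, u) *)
Definition Ra (th : R) (u : 'cV[R]_3) : 'M[R]_3 :=
  1 + sin th *: crossm u + (1 - cos th) *: (crossm u *m crossm u).

Definition Emat (B : 'M[R]_3) : 'M[R]_3 := 2^-1 *: (\tr B *: 1 - B^T).

Definition SO3 (Q : 'M[R]_3) : Prop := Q^T *m Q = 1 /\ \det Q = 1.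

Definition unit_vec (u : 'cV[R]_3) : Prop := (u^T *m u) 0 0 = 1.

Definition sym_posdef (A : 'M[R]_3) : Prop :=
  A^T = A /\ forall x : 'cV[R]_3, x != 0 -> 0 < (x^T *m A *m x) 0 0.

Definition unit_eigvec (A : 'M[R]_3) (w : 'cV[R]_3) : Prop :=
  unit_vec w /\ exists lam : R, A *m w = lam *: w.

Definition PsiV (A : 'M[R]_3) (Q : 'M[R]_3) : Prop :=
  Q = 1 \/ exists w, unit_eigvec A w /\ Q = Ra pi w.

Definition Tmap (u : 'cV[R]_3) (Q : 'M[R]_3) (th : R) : 'M[R]_3 := Q *m Ra th u.

Definition Ufun (A : 'M[R]_3) (u : 'cV[R]_3) (gam : R) (Q : 'M[R]_3) (th : R) : R :=
  \tr (A *m (1 - Tmap u Q th)) + gam / 2 * th ^+ 2.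

Definition mx_is_deriv m n (F : R -> 'M[R]_(m, n)) (t : R) (F' : 'M[R]_(m, n)) : Prop :=
  forall i j, is_derive t (1 : R) (fun s => F s i j) (F' i j).

(* G is the Riemannian gradient in Q of f(., th) on SO(3) at Q, for the metric
   <Q W1, Q W2>_Q = tr(W1^T W2): G is tangent at Q, and for every curve c in
   SO(3) through Q at s = 0 with velocity c', d/ds f(c s, th) at 0 = <G, c'>_Q. *)
Definition is_gradR (f : 'M[R]_3 -> R -> R) (Q : 'M[R]_3) (th : R) (G : 'M[R]_3) : Prop :=
  (exists W : 'M[R]_3, W^T = - W /\ G = Q *m W) /\
  forall (c : R -> 'M[R]_3) (c' : 'M[R]_3),
    (forall s, SO3 (c s)) -> c 0 = Q -> mx_is_deriv c 0 c' ->
    is_derive (0 : R) (1 : R) (fun s => f (c s) th) (\tr ((Q^T *m G)^T *m (Q^T *m c'))).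

(* the gradient nabla_R f(Q, th) (chosen among the gradients; unique on SO(3)) *)
Definition gradR (f : 'M[R]_3 -> R -> R) (Q : 'M[R]_3) (th : R) : 'M[R]_3 :=
  xget 0 [set G | is_gradR f Q th G].

Definition critical (f : 'M[R]_3 -> R -> R) (Q : 'M[R]_3) (th : R) : Prop :=
  gradR f Q th = 0 /\ is_derive th (1 : R) (fun s => f Q s) 0.

End Defs.

(* Main.v *)
Require Import Defs.
From HB Require Import structures.
From mathcomp Require Import all_boot all_order all_algebra.
From mathcomp Require Import all_classical all_reals all_analysis.
From mathcomp Require Import ring lra.
Import Order.TTheory GRing.Theory Num.Theory.
Import numFieldNormedType.Exports.
Set Implicit Arguments. Unset Strict Implicit. Unset Printing Implicit Defensive.
Local Open Scope ring_scope.
Arguments mc : simpl never.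
Arguments vc : simpl never.

Section Alg.
Variable R : realType.
Implicit Types (A B M : 'M[R]_3) (x y u : 'cV[R]_3).
Lemma mxnat (A : 'M[R]_3) (i j : 'I_3) : A i j = mc A i j.
Proof. by rewrite /mc !inord_val. Qed.
Lemma vcnat (x : 'cV[R]_3) (i : 'I_3) (j : 'I_1) : x i j = vc x i.
Proof. by rewrite /vc inord_val (ord1 j). Qed.

Ltac rg := first [ring | apply/subr0_eq; ring].
Ltac fd := first [field | apply/subr0_eq; field]; try by rewrite ?pnatr_eq0.
Ltac ent := apply/matrixP => -[[|[|[|?]]] ?] -[[|[|[|?]]] ?] //; rewrite /vc /mc !mxE;
  repeat (rewrite ?big_ord_recl ?big_ord0 ?mxE);
  rewrite ?mxnat ?vcnat /bump /= ?inordK //=.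

Definition det3f (M : 'M[R]_3) :=
  mc M 0 0 * (mc M 1 1 * mc M 2 2 - mc M 1 2 * mc M 2 1)
  - mc M 0 1 * (mc M 1 0 * mc M 2 2 - mc M 1 2 * mc M 2 0)
  + mc M 0 2 * (mc M 1 0 * mc M 2 1 - mc M 1 1 * mc M 2 0).

Lemma det3 (M : 'M[R]_3) : \det M = det3f M.
Proof.
rewrite (expand_det_row _ ord0) !big_ord_recl big_ord0 /cofactor.
rewrite !(expand_det_row _ ord0) !big_ord_recl !big_ord0 /cofactor !det_mx11 !mxE.
rewrite ?mxnat /det3f /bump /=; ring.
Qed.

Definition nrm x := vc x 0 ^+ 2 + vc x 1 ^+ 2 + vc x 2 ^+ 2.

Lemma unitP u : unit_vec u -> nrm u = 1.
Proof.
rewrite /unit_vec !mxE !big_ord_recl big_ord0 !mxE ?vcnat /bump /= /nrm => h. rewrite -h; rg.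
Qed.

Lemma crossmD x y : crossm (x + y) = crossm x + crossm y.
Proof. rewrite /crossm; ent; rg. Qed.
Lemma crossmZ a x : crossm (a *: x) = a *: crossm x.
Proof. rewrite /crossm; ent; rg. Qed.
Lemma crossmT x : (crossm x)^T = - crossm x.
Proof. rewrite /crossm; ent; rg. Qed.
Lemma crossm3 u : crossm u *m crossm u *m crossm u = - nrm u *: crossm u.
Proof. rewrite /crossm /nrm; ent; rg. Qed.
Lemma crossm_self u : crossm u *m u = 0.
Proof. rewrite /crossm; ent; rg. Qed.
Lemma crossm_rot M x : M^T *m crossm (M *m x) *m M = det3f M *: crossm x.
Proof. rewrite /crossm /det3f; ent; rg. Qed.
Lemma psi_cross x : psi (crossm x) = x.
Proof. rewrite /psi /crossm /mc; ent; fd. Qed.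
Lemma psiD A B : psi (A + B) = psi A + psi B.
Proof. rewrite /psi /mc; ent; fd. Qed.
Lemma psiZ a A : psi (a *: A) = a *: psi A.
Proof. rewrite /psi /mc; ent; fd. Qed.
Lemma psiT A : psi A^T = - psi A.
Proof. rewrite /psi /mc; ent; fd. Qed.

Lemma psi_sym A : A^T = A -> psi A = 0.
Proof.
move=> h; have : psi A = - psi A by rewrite -psiT h.
move/eqP; rewrite -subr_eq0 opprK -mulr2n -scaler_nat scaler_eq0 pnatr_eq0 /=.
by move/eqP.
Qed.
Lemma crossm0 : crossm (0 : 'cV[R]_3) = 0.
Proof. by rewrite -(scale0r (0 : 'cV[R]_3)) crossmZ scale0r. Qed.
Lemma skew_dec A : A - A^T = 2 *: crossm (psi A).
Proof. rewrite /crossm /psi; ent; fd. Qed.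
Lemma sym_part A : (A - crossm (psi A))^T = A - crossm (psi A).
Proof. rewrite /crossm /psi; ent; fd. Qed.
Lemma psi0_sym A : psi A = 0 -> A^T = A.
Proof.
move=> h; apply/eqP; rewrite eq_sym -subr_eq0; apply/eqP.
by rewrite skew_dec h crossm0 scaler0.
Qed.
Lemma psi_skewpart A : psi (2^-1 *: (A - A^T)) = psi A.
Proof. rewrite /psi; ent; fd. Qed.
Lemma psi_cross_r B x : psi (B *m crossm x) = Emat B *m x.
Proof. rewrite /psi /crossm /Emat /mxtrace; ent; fd. Qed.
Lemma psi_cross_l B u : psi (crossm u *m B) = Emat B *m u - crossm (psi B) *m u.
Proof. rewrite /psi /crossm /Emat /mxtrace; ent; fd. Qed.

Lemma ord3_eqE (i j : 'I_3) : (i == j) = (val i == val j).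
Proof. by []. Qed.
Ltac sent := rewrite /vc /mc /mxtrace !mxE;
  repeat (rewrite ?big_ord_recl ?big_ord0 ?mxE);
  rewrite ?ord3_eqE ?mxnat ?vcnat /bump /= ?inordK //=.

Lemma tr_cross B u : \tr (B *m crossm u) = - 2 * (u^T *m psi B) 0 0.
Proof. rewrite /psi /crossm; sent; fd. Qed.
Lemma tr_crossT W x : \tr (W^T *m crossm x) = 2 * (x^T *m psi W) 0 0.
Proof. rewrite /psi /crossm; sent; fd. Qed.
Lemma crossm_sym_gen A x :
  A *m crossm x + crossm x *m A^T = crossm (\tr A *: x - A^T *m x).
Proof. rewrite /crossm /mxtrace; ent; rg. Qed.
Lemma crossm_sq x : crossm x *m crossm x = x *m x^T - nrm x *: 1.
Proof. rewrite /crossm /nrm; ent; rg. Qed.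
Lemma tr_KAK A x : \tr ((crossm x)^T *m A *m crossm x) = nrm x * \tr A - (x^T *m A *m x) 0 0.
Proof. rewrite /crossm /nrm; sent; rg. Qed.

Definition c2f (M : 'M[R]_3) :=
  mc M 0 0 * mc M 1 1 - mc M 0 1 * mc M 1 0 + mc M 0 0 * mc M 2 2 - mc M 0 2 * mc M 2 0
  + mc M 1 1 * mc M 2 2 - mc M 1 2 * mc M 2 1.
Lemma CH3 M : M *m M *m M - \tr M *: (M *m M) + c2f M *: M - det3f M *: 1 = 0.
Proof. rewrite /c2f /det3f /mxtrace; ent; rg. Qed.

Lemma RaT th u : (Ra th u)^T = 1 - sin th *: crossm u + (1 - cos th) *: (crossm u *m crossm u).
Proof. rewrite /Ra /crossm; ent; rg. Qed.
Lemma Ra_orth_gen th u : (Ra th u)^T *m Ra th u =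
  1 + (2 * (1 - cos th) - sin th ^+ 2 - nrm u * (1 - cos th) ^+ 2) *: (crossm u *m crossm u).
Proof. rewrite /Ra /crossm /nrm; ent; rg. Qed.
Lemma Ra_det_gen th u : \det (Ra th u) = (1 - (1 - cos th) * nrm u) ^+ 2 + sin th ^+ 2 * nrm u.
Proof. rewrite det3 /det3f /Ra /crossm /nrm; sent; rg. Qed.
Lemma Ra_u th u : Ra th u *m u = u.
Proof. rewrite /Ra /crossm; ent; rg. Qed.
Lemma Ra_K_gen th u : Ra th u *m crossm u =
  (1 - (1 - cos th) * nrm u) *: crossm u + sin th *: (crossm u *m crossm u).
Proof. rewrite /Ra /crossm /nrm; ent; rg. Qed.
End Alg.

Section Der.
Variable R : realType.
Implicit Types (f g : R -> R) (t a b : R).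

Lemma dext f g t a : is_derive t 1 f a -> (forall s, f s = g s) -> is_derive t 1 g a.
Proof. by move=> h e; have <- : f = g by apply/funext. Qed.
Lemma deq f t a b : a = b -> is_derive t 1 f a -> is_derive t 1 f b.
Proof. by move=> ->. Qed.
Lemma dC t (c : R) : is_derive t 1 (fun _ => c) 0.
Proof. exact: is_derive_cst. Qed.
Lemma dD f g t a b : is_derive t 1 f a -> is_derive t 1 g b ->
  is_derive t 1 (fun s => f s + g s) (a + b).
Proof. move=> ? ?; exact: is_deriveD. Qed.
Lemma dN f t a : is_derive t 1 f a -> is_derive t 1 (fun s => - f s) (- a).
Proof. move=> ?; exact: is_deriveN. Qed.
Lemma dB f g t a b : is_derive t 1 f a -> is_derive t 1 g b ->
  is_derive t 1 (fun s => f s - g s) (a - b).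
Proof. move=> ? ?; exact: is_deriveB. Qed.
Lemma dM f g t a b : is_derive t 1 f a -> is_derive t 1 g b ->
  is_derive t 1 (fun s => f s * g s) (a * g t + f t * b).
Proof.
move=> ? ?; apply: deq (is_deriveM _ _); rewrite /GRing.scale /= mulrC addrC; congr (_ + _); exact: mulrC.
Qed.
Lemma dsum n (h : 'I_n -> R -> R) t (dh : 'I_n -> R) :
  (forall k, is_derive t 1 (h k) (dh k)) ->
  is_derive t 1 (fun s => \sum_(k < n) h k s) (\sum_(k < n) dh k).
Proof. move=> H; have := is_derive_sum H; by rewrite fct_sumE. Qed.
Lemma dsin f t a : is_derive t 1 f a -> is_derive t 1 (fun s => sin (f s)) (cos (f t) * a).
Proof. move=> H; exact: (is_derive1_comp (f:=sin) (g:=f)). Qed.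
Lemma dcos f t a : is_derive t 1 f a -> is_derive t 1 (fun s => cos (f s)) (- sin (f t) * a).
Proof. move=> H; exact: (is_derive1_comp (f:=cos) (g:=f)). Qed.
Lemma duniq f t a b : is_derive t 1 f a -> is_derive t 1 f b -> a = b.
Proof. by move=> Ha Hb; rewrite -(@derive_val _ _ _ _ _ _ _ Ha) -(@derive_val _ _ _ _ _ _ _ Hb). Qed.

Lemma mxd_ext m n (F G : R -> 'M[R]_(m,n)) t F' :
  (forall s, F s = G s) -> mx_is_deriv F t F' -> mx_is_deriv G t F'.
Proof. by move=> e; have -> : F = G by apply/funext. Qed.
Lemma mxd_eq m n (F : R -> 'M[R]_(m,n)) t F1 F2 :
  F1 = F2 -> mx_is_deriv F t F1 -> mx_is_deriv F t F2.
Proof. by move=> ->. Qed.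
Lemma mxd_cst m n (M : 'M[R]_(m,n)) t : mx_is_deriv (fun _ => M) t 0.
Proof. move=> i j; rewrite mxE; exact: dC. Qed.
Lemma mxd_add m n (F G : R -> 'M[R]_(m,n)) t F' G' :
  mx_is_deriv F t F' -> mx_is_deriv G t G' -> mx_is_deriv (fun s => F s + G s) t (F' + G').
Proof.
move=> hF hG i j; rewrite mxE; refine (dext (dD (hF i j) (hG i j)) _) => s; by rewrite mxE.
Qed.
Lemma mxd_opp m n (F : R -> 'M[R]_(m,n)) t F' :
  mx_is_deriv F t F' -> mx_is_deriv (fun s => - F s) t (- F').
Proof.
move=> hF i j; rewrite mxE; refine (dext (dN (hF i j)) _) => s; by rewrite mxE.
Qed.
Lemma mxd_sub m n (F G : R -> 'M[R]_(m,n)) t F' G' :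
  mx_is_deriv F t F' -> mx_is_deriv G t G' -> mx_is_deriv (fun s => F s - G s) t (F' - G').
Proof. move=> hF hG; apply: mxd_add hF (mxd_opp hG). Qed.
Lemma mxd_scal m n (a : R -> R) (F : R -> 'M[R]_(m,n)) t a' F' :
  is_derive t 1 a a' -> mx_is_deriv F t F' ->
  mx_is_deriv (fun s => a s *: F s) t (a' *: F t + a t *: F').
Proof.
move=> ha hF i j; rewrite !mxE; refine (dext (dM ha (hF i j)) _) => s; by rewrite mxE.
Qed.
Lemma mxd_mul m n p (F : R -> 'M[R]_(m,n)) (G : R -> 'M[R]_(n,p)) t F' G' :
  mx_is_deriv F t F' -> mx_is_deriv G t G' ->
  mx_is_deriv (fun s => F s *m G s) t (F' *m G t + F t *m G').
Proof.
move=> hF hG i j; rewrite !mxE -big_split /=.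
refine (dext (dsum (fun k => dM (hF i k) (hG k j))) _) => s; by rewrite mxE.
Qed.
Lemma mxd_tr m n (F : R -> 'M[R]_(m,n)) t F' :
  mx_is_deriv F t F' -> mx_is_deriv (fun s => (F s)^T) t F'^T.
Proof. move=> hF i j; rewrite mxE; refine (dext (hF j i) _) => s; by rewrite mxE. Qed.
Lemma der_tr n (F : R -> 'M[R]_n) t F' :
  mx_is_deriv F t F' -> is_derive t 1 (fun s => \tr (F s)) (\tr F').
Proof. move=> hF; exact: (dsum (fun k => hF k k)). Qed.
Lemma mxd_uniq m n (F : R -> 'M[R]_(m,n)) t F1 F2 :
  mx_is_deriv F t F1 -> mx_is_deriv F t F2 -> F1 = F2.
Proof. move=> h1 h2; apply/matrixP => i j; exact: duniq (h1 i j) (h2 i j). Qed.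
Lemma mxd_cst_eq m n (F : R -> 'M[R]_(m,n)) :
  (forall t, mx_is_deriv F t 0) -> forall s, F s = F 0.
Proof.
move=> h s; apply/matrixP => i j; apply: (@is_derive_0_is_cst _ (fun s => F s i j)) => x.
by have := h x i j; rewrite mxE.
Qed.
Lemma mxd_psi (F : R -> 'M[R]_3) t F' :
  mx_is_deriv F t F' -> mx_is_deriv (fun s => psi (F s)) t (psi F').
Proof.
move=> hF i j; rewrite mxE.
have hm : forall a b : nat, is_derive t 1 (fun s => mc (F s) a b) (mc F' a b) by move=> a b; exact: hF.
case: i => -[|[|[|?]]] ? /=.
all: refine (deq _ (dext (dM (@dC t 2^-1) (dB (hm _ _) (hm _ _))) _)); [by rewrite mul0r add0r | by move=> s; rewrite mxE].
Qed.
Lemma did t : is_derive t 1 (fun s : R => s) 1.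
Proof. exact: is_derive_id. Qed.
Lemma mxd_Ra u (th : R -> R) t v : is_derive t 1 th v ->
  mx_is_deriv (fun s => Ra (th s) u) t
    (v *: (cos (th t) *: crossm u + sin (th t) *: (crossm u *m crossm u))).
Proof.
move=> h.
have H := mxd_add (mxd_add (mxd_cst 1 t) (mxd_scal (dsin h) (mxd_cst (crossm u) t)))
   (mxd_scal (dB (@dC t 1) (dcos h)) (mxd_cst (crossm u *m crossm u) t)).
refine (mxd_eq _ (mxd_ext _ H)); last by [].
apply/matrixP => i j; rewrite !mxE; ring.
Qed.
End Der.

Section G.
Variable R : realType.
Implicit Types (gam th t lam : R).
Implicit Types (A B M Q W : 'M[R]_3) (x y u : 'cV[R]_3).
Ltac rg := first [ring | apply/subr0_eq; ring].
Ltac fd := first [field | apply/subr0_eq; field]; try by rewrite ?pnatr_eq0.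
Ltac ent := apply/matrixP => -[[|[|[|?]]] ?] -[[|[|[|?]]] ?] //; rewrite /vc /mc !mxE;
  repeat (rewrite ?big_ord_recl ?big_ord0 ?mxE);
  rewrite ?mxnat ?vcnat /bump /= ?inordK //=.
Ltac sent := rewrite /vc /mc /mxtrace !mxE;
  repeat (rewrite ?big_ord_recl ?big_ord0 ?mxE);
  rewrite ?ord3_eqE ?mxnat ?vcnat /bump /= ?inordK //=.

Definition Mm A u Q (th : R) := Ra th u *m A *m Q.
Definition Wm A u Q (th : R) := 2^-1 *: (Mm A u Q th - (Mm A u Q th)^T).

Lemma orthC Q : Q^T *m Q = 1 -> Q *m Q^T = 1.
Proof. exact: mulmx1C. Qed.

Lemma Ra_orth th u : nrm u = 1 -> (Ra th u)^T *m Ra th u = 1.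
Proof.
move=> hn; rewrite Ra_orth_gen hn mul1r.
have -> : (2 * (1 - cos th) - sin th ^+ 2 - (1 - cos th) ^+ 2) = 0 by rewrite sin2cos2; rg.
by rewrite scale0r addr0.
Qed.
Lemma Ra_det th u : nrm u = 1 -> \det (Ra th u) = 1.
Proof. move=> hn; rewrite Ra_det_gen hn !mulr1 sin2cos2; rg. Qed.
Lemma Ra_SO3 th u : nrm u = 1 -> SO3 (Ra th u).
Proof. by move=> hn; split; [exact: Ra_orth | exact: Ra_det]. Qed.
Lemma Ra_K th u : nrm u = 1 ->
  Ra th u *m crossm u = cos th *: crossm u + sin th *: (crossm u *m crossm u).
Proof. move=> hn; rewrite Ra_K_gen hn mulr1; congr (_ *: _ + _); rg. Qed.
Lemma RaT_u th u : nrm u = 1 -> (Ra th u)^T *m u = u.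
Proof. by move=> hn; rewrite -{2}(Ra_u th u) mulmxA (Ra_orth _ hn) mul1mx. Qed.

Lemma cconj Q x : SO3 Q -> Q *m crossm x *m Q^T = crossm (Q *m x).
Proof.
case=> hQ hd; have := crossm_rot Q^T (Q *m x).
by rewrite trmxK (mulmxA Q^T Q x) hQ mul1mx -det3 det_tr hd scale1r.
Qed.
Lemma cconjT Q x : SO3 Q -> Q^T *m crossm x *m Q = crossm (Q^T *m x).
Proof.
case=> hQ hd; have := crossm_rot Q (Q^T *m x).
by rewrite (mulmxA Q Q^T x) (orthC hQ) mul1mx -det3 hd scale1r.
Qed.
Lemma psi_rot Q B : SO3 Q -> psi (Q *m B *m Q^T) = Q *m psi B.
Proof.
move=> hQ; have e : B = (B - crossm (psi B)) + crossm (psi B) by rewrite subrK.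
rewrite {1}e mulmxDr mulmxDl psiD cconj // psi_cross psi_sym ?add0r //.
by rewrite !trmx_mul trmxK sym_part mulmxA.
Qed.

Lemma U_curve A u (gam : R) (c : R -> 'M[R]_3) c' (th : R) : mx_is_deriv c 0 c' ->
  is_derive (0:R) (1:R) (fun s => Ufun A u gam (c s) th) (- \tr (A *m (c' *m Ra th u))).
Proof.
move=> hc.
have h1 := der_tr (mxd_mul (mxd_cst A 0) (mxd_sub (mxd_cst 1 0) (mxd_mul hc (mxd_cst (Ra th u) 0)))).
have h2 := dD h1 (@dC _ 0 (gam / 2 * th ^+ 2)).
refine (deq _ (dext h2 _)); last by move=> s; rewrite /Ufun /Tmap.
by rewrite mul0mx add0r sub0r mulmx0 !addr0 mulmxN linearN.
Qed.

Lemma skew_deriv (c : R -> 'M[R]_3) c' Q : (forall s, SO3 (c s)) -> c 0 = Q ->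
  mx_is_deriv c 0 c' -> (Q^T *m c')^T = - (Q^T *m c').
Proof.
move=> hs h0 hc.
have h := mxd_mul (mxd_tr hc) hc.
have h' : mx_is_deriv (fun s => (c s)^T *m c s) 0 0.
  by refine (mxd_ext _ (mxd_cst 1 0)) => s; rewrite (proj1 (hs s)).
have := mxd_uniq h h'; rewrite h0 => /eqP; rewrite addr_eq0 => /eqP e.
by rewrite trmx_mul trmxK e.
Qed.

Lemma grad_exists A u gam Q th : SO3 Q -> is_gradR (Ufun A u gam) Q th (Q *m Wm A u Q th).
Proof.
case=> hQ hd; split.
  exists (Wm A u Q th); split=> //.
  by rewrite /Wm linearZ /= linearB /= trmxK -scalerN opprB.
move=> c c' hs h0 hc.
have hO := skew_deriv hs h0 hc.
refine (deq _ (U_curve A u gam th hc)).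
rewrite (mulmxA Q^T Q) hQ mul1mx.
set O := Q^T *m c'.
have e1 : \tr (Mm A u Q th *m O) = \tr (A *m (c' *m Ra th u)).
  rewrite /O /Mm -!mulmxA (mulmxA Q) (orthC hQ) mul1mx mxtrace_mulC.
  by rewrite -mulmxA.
have e3 : \tr ((Mm A u Q th)^T *m O) = - \tr (Mm A u Q th *m O).
  by rewrite -mxtrace_tr trmx_mul trmxK hO mulNmx linearN /= mxtrace_mulC.
rewrite -e1 /Wm linearZ /= linearB /= trmxK -scalemxAl mulmxBl linearZ /= linearB /= e3.
fd.
Qed.

Definition ev (k : nat) : 'cV[R]_3 := \col_(i < 3) (if nat_of_ord i == k then 1 else 0).

Lemma ev_nrm k : (k < 3)%N -> nrm (ev k) = 1.
Proof. case: k => [|[|[|?]]] // _; rewrite /nrm /ev /vc !mxE !inordK //= !expr2 ?mulr0 ?mulr1 ?addr0 ?add0r //. Qed.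
Lemma ev_dot k y : (k < 3)%N -> ((ev k)^T *m y) 0 0 = vc y k.
Proof.
case: k => [|[|[|?]]] // _; rewrite /ev !mxE !big_ord_recl big_ord0 !mxE /= ?vcnat /bump /=; rg.
Qed.
Lemma vc_ext x y : (forall k, (k < 3)%N -> vc x k = vc y k) -> x = y.
Proof.
move=> h; apply/matrixP => -[[|[|[|?]]] ?] -[[|?] ?] //; rewrite !vcnat; exact: h.
Qed.
Lemma sym_dec2 W : W - crossm (psi W) = 2^-1 *: (W + W^T).
Proof. rewrite /crossm /psi; ent; fd. Qed.
Lemma skew_psi W : W^T = - W -> W = crossm (psi W).
Proof.
move=> h; apply/eqP; rewrite -subr_eq0 sym_dec2 h subrr scaler0 //.
Qed.

Lemma psi0 : psi (0 : 'M[R]_3) = 0.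
Proof. by rewrite -(scale0r (0 : 'M[R]_3)) psiZ scale0r. Qed.
Lemma xTx x : (x^T *m x) 0 0 = nrm x.
Proof. rewrite /nrm; sent; rg. Qed.

Lemma grad_unique (f : 'M[R]_3 -> R -> R) Q th G1 G2 : SO3 Q ->
  is_gradR f Q th G1 -> is_gradR f Q th G2 -> G1 = G2.
Proof.
move=> hQ [[W1 [h1 ->]] d1] [[W2 [h2 ->]] d2].
have hQQ := proj1 hQ.
congr (_ *m _).
rewrite (skew_psi h1) (skew_psi h2); congr crossm; apply: vc_ext => k hk.
have hn := ev_nrm hk.
pose c := fun s => Q *m Ra s (ev k).
have hc : mx_is_deriv c 0 (Q *m crossm (ev k)).
  refine (mxd_eq _ (mxd_mul (mxd_cst Q 0) (mxd_Ra (ev k) (did 0)))).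
  by rewrite mul0mx add0r scale1r cos0 sin0 scale0r addr0 scale1r.
have hs : forall s, SO3 (c s).
  move=> s; split.
    by rewrite /c trmx_mul mulmxA -(mulmxA _ Q^T) hQQ mulmx1 (Ra_orth _ hn).
  by rewrite /c det_mulmx (proj2 hQ) (Ra_det _ hn) mul1r.
have h0 : c 0 = Q by rewrite /c /Ra sin0 cos0 subrr !scale0r !addr0 mulmx1.
have := duniq (d1 c _ hs h0 hc) (d2 c _ hs h0 hc).
rewrite !(mulmxA Q^T Q) hQQ !mul1mx !tr_crossT !ev_dot // => e.
have n2 : (2 : R) != 0 by rewrite pnatr_eq0.
exact: (mulfI n2 e).
Qed.

Lemma gradR_val A u gam Q th : SO3 Q -> gradR (Ufun A u gam) Q th = Q *m Wm A u Q th.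
Proof.
move=> hQ; have hE := grad_exists A u gam th hQ.
have := @xgetI _ 0 [set G | is_gradR (Ufun A u gam) Q th G] _ hE.
rewrite /gradR => h; exact: grad_unique hQ h hE.
Qed.

Lemma item2b A u Q th : nrm u = 1 ->
  psi (Mm A u Q th) = Ra th u *m psi (A *m Tmap u Q th).
Proof.
move=> hn; have hR := Ra_SO3 th hn.
rewrite -(psi_rot _ hR) /Tmap /Mm; congr psi.
by rewrite !mulmxA -(mulmxA _ (Ra th u)) (orthC (proj1 hR)) mulmx1.
Qed.

Lemma item2 A u gam Q th : nrm u = 1 -> SO3 Q ->
  psi (Q^T *m gradR (Ufun A u gam) Q th) = Ra th u *m psi (A *m Tmap u Q th).
Proof.
move=> hn hQ; rewrite gradR_val // mulmxA (proj1 hQ) mul1mx /Wm psi_skewpart.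
exact: item2b.
Qed.

Lemma item3 A u gam Q th : nrm u = 1 ->
  is_derive th 1 (fun s => Ufun A u gam Q s)
    (gam * th + 2 * (u^T *m psi (A *m Tmap u Q th)) 0 0).
Proof.
move=> hn.
have hR := mxd_Ra u (did th).
have h1 := der_tr (mxd_mul (mxd_cst A th) (mxd_sub (mxd_cst 1 th) (mxd_mul (mxd_cst Q th) hR))).
have h2 := dM (@dC _ th (gam / 2)) (dM (did th) (did th)).
refine (deq _ (dext (dD h1 h2) _)); last by move=> s; rewrite /Ufun /Tmap expr2.
rewrite mul0mx add0r sub0r mul0mx add0r scale1r -Ra_K // mulmxN linearN /=.
rewrite (mulmxA Q) (mulmxA A) tr_cross /Tmap.
fd.
Qed.
End G.

Section G2.
Variable R : realType.
Implicit Types (gam th t lam : R).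
Implicit Types (A B M Q : 'M[R]_3) (x y u : 'cV[R]_3).
Ltac rg := first [ring | apply/subr0_eq; ring].
Ltac fd := first [field | apply/subr0_eq; field]; try by rewrite ?pnatr_eq0.
Ltac ent := apply/matrixP => -[[|[|[|?]]] ?] -[[|[|[|?]]] ?] //; rewrite /vc /mc !mxE;
  repeat (rewrite ?big_ord_recl ?big_ord0 ?mxE);
  rewrite ?mxnat ?vcnat /bump /= ?inordK //=.
Ltac sent := rewrite /vc /mc /mxtrace !mxE;
  repeat (rewrite ?big_ord_recl ?big_ord0 ?mxE);
  rewrite ?ord3_eqE ?mxnat ?vcnat /bump /= ?inordK //=.

Lemma traj_SO3 (Rt : R -> 'M[R]_3) (om : R -> 'cV[R]_3) : SO3 (Rt 0) ->
  (forall t, mx_is_deriv Rt t (Rt t *m crossm (om t))) -> forall t, SO3 (Rt t).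
Proof.
move=> h0 hd.
have hRRT : forall t, Rt t *m (Rt t)^T = 1.
  move=> t.
  have hc : forall s, mx_is_deriv (fun s => Rt s *m (Rt s)^T) s 0.
    move=> s; refine (mxd_eq _ (mxd_mul (hd s) (mxd_tr (hd s)))).
    by rewrite trmx_mul crossmT mulNmx mulmxN !mulmxA subrr.
  have := mxd_cst_eq hc t => /= ->.
  exact: orthC (proj1 h0).
have hdet : forall t, det3f (Rt t) = det3f (Rt 0).
  move=> t; apply: (@is_derive_0_is_cst _ (fun s => det3f (Rt s))) => x.
  have hm : forall a b : nat, is_derive x 1 (fun s => mc (Rt s) a b)
      (mc (Rt x *m crossm (om x)) a b) by move=> a b; exact: hd.
  refine (deq _ (dext (dD (dB (dM (hm 0 0) (dB (dM (hm 1 1) (hm 2 2)) (dM (hm 1 2) (hm 2 1))))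
     (dM (hm 0 1) (dB (dM (hm 1 0) (hm 2 2)) (dM (hm 1 2) (hm 2 0)))))
     (dM (hm 0 2) (dB (dM (hm 1 0) (hm 2 1)) (dM (hm 1 1) (hm 2 0))))) _)); last first.
    by move=> s; rewrite /det3f.
  rewrite /crossm; sent; rg.
move=> t; split; first exact: mulmx1C (hRRT t).
by rewrite det3 hdet -det3 (proj2 h0).
Qed.

Lemma item1 u (Rt : R -> 'M[R]_3) (th : R -> R) (om : R -> 'cV[R]_3) (v : R -> R) t :
  nrm u = 1 -> (forall t, mx_is_deriv Rt t (Rt t *m crossm (om t))) ->
  (forall t, is_derive t 1 th (v t)) ->
  mx_is_deriv (fun s => Tmap u (Rt s) (th s)) t
    (Tmap u (Rt t) (th t) *m crossm ((Ra (th t) u)^T *m om t + v t *: u)).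
Proof.
move=> hn hd hth.
have hR := Ra_SO3 (th t) hn.
refine (mxd_eq _ (mxd_ext _ (mxd_mul (hd t) (mxd_Ra u (hth t))))); last by move=> s.
rewrite -Ra_K // crossmD crossmZ /Tmap -(cconjT _ hR) (mulmxDr (Rt t *m Ra (th t) u)).
congr (_ + _).
  by rewrite !mulmxA -(mulmxA (Rt t) (Ra (th t) u)) (orthC (proj1 hR)) mulmx1.
by rewrite -!scalemxAr mulmxA.
Qed.

Lemma item5 A u gam (Rt : R -> 'M[R]_3) (th : R -> R) (om : R -> 'cV[R]_3) (v : R -> R) t :
  nrm u = 1 -> SO3 (Rt 0) -> (forall t, mx_is_deriv Rt t (Rt t *m crossm (om t))) ->
  (forall t, is_derive t 1 th (v t)) ->
  mx_is_deriv (fun s => psi ((Rt s)^T *m gradR (Ufun A u gam) (Rt s) (th s))) t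
    ((Ra (th t) u *m Emat (A *m Tmap u (Rt t) (th t)) *m (Ra (th t) u)^T) *m om t
     + v t *: (Ra (th t) u *m Emat (A *m Tmap u (Rt t) (th t)) *m u
               - crossm (Ra (th t) u *m psi (A *m Tmap u (Rt t) (th t))) *m u)).
Proof.
move=> hn h0 hd hth.
have hS := traj_SO3 h0 hd.
have hf : forall s, psi ((Rt s)^T *m gradR (Ufun A u gam) (Rt s) (th s))
    = psi (Ra (th s) u *m A *m Rt s).
  by move=> s; rewrite gradR_val // mulmxA (proj1 (hS s)) mul1mx /Wm psi_skewpart.
refine (mxd_eq _ (mxd_ext _ (mxd_psi (mxd_mul (mxd_mul (mxd_Ra u (hth t)) (mxd_cst A t)) (hd t))))); last first.
  by move=> s; rewrite hf.
have hR : SO3 (Ra (th t) u) := Ra_SO3 _ hn.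
have oR := orthC (proj1 hR).
have hu := RaT_u (th t) hn.
rewrite -Ra_K // mulmx0 addr0 psiD /Tmap.
set Rr := Ra (th t) u; set Q := Rt t; set w := om t.
set B := A *m (Q *m Rr).
have e1 : Rr *m A *m (Q *m crossm w) = Rr *m (B *m crossm (Rr^T *m w)) *m Rr^T.
  by rewrite -(cconjT _ hR) /B !mulmxA -!(mulmxA _ Rr Rr^T) !oR !mulmx1.
have e2 : v t *: (Rr *m crossm u) *m A *m Q = v t *: (Rr *m (crossm u *m B) *m Rr^T).
  by rewrite /B -!scalemxAl !mulmxA -!(mulmxA _ Rr Rr^T) !oR !mulmx1.
rewrite e1 e2 psiZ !psi_rot // psi_cross_r psi_cross_l.
have e3 : crossm (Rr *m psi B) *m u = Rr *m (crossm (psi B) *m u).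
  by rewrite -(cconj _ hR) -!mulmxA hu.
by rewrite e3 mulmxBr !mulmxA addrC.
Qed.
End G2.

Section G3.
Variable R : realType.
Implicit Types (gam th t lam : R).
Implicit Types (A B M P Q : 'M[R]_3) (x y u w : 'cV[R]_3).
Ltac rg := first [ring | apply/subr0_eq; ring].
Ltac fd := first [field | apply/subr0_eq; field]; try by rewrite ?pnatr_eq0.
Ltac ent := apply/matrixP => -[[|[|[|?]]] ?] -[[|[|[|?]]] ?] //; rewrite /vc /mc !mxE;
  repeat (rewrite ?big_ord_recl ?big_ord0 ?mxE);
  rewrite ?mxnat ?vcnat /bump /= ?inordK //=.
Ltac sent := rewrite /vc /mc /mxtrace !mxE;
  repeat (rewrite ?big_ord_recl ?big_ord0 ?mxE);
  rewrite ?ord3_eqE ?mxnat ?vcnat /bump /= ?inordK //=.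

Lemma msq (x : R) : 0 <= x * x.
Proof. by rewrite -expr2 sqr_ge0. Qed.
Lemma trTT0 M : \tr (M^T *m M) = 0 -> M = 0.
Proof.
move=> h.
have e : \tr (M^T *m M) = \sum_(i < 3) \sum_(k < 3) M k i * M k i.
  by apply: eq_bigr => i _; rewrite mxE; apply: eq_bigr => k _; rewrite mxE.
rewrite e in h.
have hi : forall i : 'I_3, \sum_(k < 3) M k i * M k i = 0.
  move=> i; apply: (psumr_eq0P _ h) => // i0 _; apply: sumr_ge0 => k _; exact: msq.
apply/matrixP => k i; rewrite mxE.
have : M k i * M k i = 0 by apply: (psumr_eq0P _ (hi i)) => // k0 _; exact: msq.
by move/eqP; rewrite mulf_eq0 orbb => /eqP.
Qed.

Lemma mx1_scal (N : 'M[R]_1) : N = (N 0 0)%:M.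
Proof. by apply/matrixP => a b; rewrite !ord1 !mxE eqxx. Qed.

Lemma Ra0 u : Ra 0 u = 1.
Proof. by rewrite /Ra sin0 cos0 subrr !scale0r !addr0. Qed.

Lemma Rapi w : nrm w = 1 -> Ra pi w = 2 *: (w *m w^T) - 1.
Proof.
move=> hn; rewrite /Ra sinpi cospi scale0r addr0 crossm_sq hn scale1r.
apply/matrixP => i j; rewrite !mxE; rg.
Qed.

Lemma psiV_sym A Q : A^T = A -> PsiV A Q -> (A *m Q)^T = A *m Q.
Proof.
move=> hA [->|[w [[hu [lam hl]] ->]]]; first by rewrite mulmx1 hA.
have hn := unitP hu.
rewrite Rapi //.
have hc : A *m (w *m w^T) = (w *m w^T) *m A.
  have e : w^T *m A = lam *: w^T by rewrite -{1}hA -trmx_mul hl linearZ.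
  by rewrite mulmxA hl -mulmxA e -scalemxAl -scalemxAr.
rewrite trmx_mul hA linearB /= linearZ /= trmx1 trmx_mul trmxK.
by rewrite mulmxBl mulmxBr mul1mx mulmx1 -scalemxAl -scalemxAr hc.
Qed.

Lemma crit A Q : sym_posdef A -> SO3 Q -> (A *m Q)^T = A *m Q -> PsiV A Q.
Proof.
case=> hA hpd [hQ hd] hsym.
have hQQ := orthC hQ.
have e1 : A *m Q = Q^T *m A by rewrite -hsym trmx_mul hA.
have e2 : Q *m A = A *m Q^T.
  have h : Q *m (A *m Q) *m Q^T = Q *m (Q^T *m A) *m Q^T by rewrite e1.
  move: h; rewrite !mulmxA hQQ mul1mx -!mulmxA hQQ mulmx1 => h; exact: h.
set x := psi Q.
have eX : Q - Q^T = 2 *: crossm x := skew_dec Q.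
have eAX : A *m (Q - Q^T) + (Q - Q^T) *m A^T = 0.
  by rewrite hA mulmxBr mulmxBl e1 -e2 addrA subrK subrr.
rewrite eX -scalemxAr -scalemxAl -scalerDr crossm_sym_gen in eAX.
move/eqP: eAX; rewrite scaler_eq0 pnatr_eq0 /= => /eqP ey.
have hy : \tr A *: x - A^T *m x = 0 by rewrite -(psi_cross (\tr A *: x - A^T *m x)) ey psi0.
move: hy; rewrite hA => /eqP; rewrite subr_eq0 => /eqP hAx.
have hq : (x^T *m A *m x) 0 0 = \tr A * nrm x.
  by rewrite -mulmxA -hAx -scalemxAr mxE xTx.
set Kx := crossm x.
have htr : \tr (Kx^T *m A *m Kx) = 0 by rewrite tr_KAK hq mulrC subrr.
have hcol : forall k : 'I_3, ((col k Kx)^T *m A *m col k Kx) 0 0 = (Kx^T *m A *m Kx) k k.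
  move=> k; rewrite !mxE; apply: eq_bigr => j _; rewrite !mxE; congr (_ * _).
  by apply: eq_bigr => i _; rewrite !mxE.
have hnn : forall k : 'I_3, 0 <= (Kx^T *m A *m Kx) k k.
  move=> k; rewrite -hcol; have [->|nz] := eqVneq (col k Kx) 0.
    by rewrite mulmx0 mxE.
  exact/ltW/hpd.
have hall := psumr_eq0P (fun i _ => hnn i) htr.
have hz : forall k : 'I_3, col k Kx = 0.
  move=> k; apply/eqP; apply: contraT => nz.
  by have := hpd _ nz; rewrite hcol hall // ltxx.
have hK0 : Kx = 0.
  apply/matrixP => i j; have := congr1 (fun M : 'cV[R]_3 => M i 0) (hz j).
  by rewrite !mxE.
have hx0 : x = 0 by rewrite -(psi_cross x) -/Kx hK0 psi0.
have hQs : Q^T = Q.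
  by apply/eqP; rewrite eq_sym -subr_eq0 eX hx0 crossm0 scaler0.
have hQ2 : Q *m Q = 1 by rewrite -{1}hQs hQ.
have hCH := CH3 Q.
rewrite hQ2 mul1mx -det3 hd scale1r in hCH.
have hCH' : (1 + c2f Q) *: Q - (1 + \tr Q) *: 1 = 0.
  rewrite -hCH; apply/matrixP => i j; rewrite !mxE; rg.
have hAQ : A *m Q = Q *m A by rewrite e1 hQs.
case: (eqVneq (1 + c2f Q) 0) => hc2; last first.
  left.
  set lam := (1 + \tr Q) / (1 + c2f Q).
  have hQl : Q = lam *: 1.
    have h : (1 + c2f Q) *: Q = (1 + \tr Q) *: 1 by apply/eqP; rewrite -subr_eq0 hCH'.
    by rewrite -[Q]scale1r -(mulVf hc2) -scalerA h scalerA /lam mulrC.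
  have hl2 : lam * lam = 1.
    have := congr1 (fun M : 'M[R]_3 => M 0 0) hQ2.
    by rewrite hQl -scalemxAl -scalemxAr mul1mx scalerA !mxE eqxx !mulr1.
  have hl3 : lam ^+ 3 = 1.
    by rewrite -hd hQl scalemx1 det_scalar.
  have hl1 : lam = 1.
    by rewrite -hl3 exprS expr2 hl2 mulr1.
  by rewrite hQl hl1 scale1r.
right.
have htrQ : \tr Q = -1.
  move/eqP: hCH'; rewrite hc2 scale0r sub0r oppr_eq0 scaler_eq0 oner_eq0 orbF.
  by rewrite addrC addr_eq0 => /eqP.
have n2 : (2 : R) != 0 by rewrite pnatr_eq0.
set P := 2^-1 *: (Q + 1).
have hPT : P^T = P by rewrite /P linearZ /= linearD /= hQs trmx1.
have hPP : P *m P = P.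
  rewrite /P -scalemxAl -scalemxAr scalerA mulmxDl !mulmxDr hQ2 !mul1mx !mulmx1.
  apply/matrixP => i j; rewrite !mxE; fd.
have htrP : \tr P = 1.
  rewrite /P mxtraceZ mxtraceD mxtrace1 htrQ; fd.
have hPdef : P = 2^-1 *: (Q + 1) by [].
clearbody P.
have [j hj] : exists j : 'I_3, P j j != 0.
  move: htrP; rewrite /mxtrace !big_ord_recl big_ord0 addr0 => h.
  case: (eqVneq (P ord0 ord0) 0) => h0; last by exists ord0.
  case: (eqVneq (P (lift ord0 ord0) (lift ord0 ord0)) 0) => h1; last by eexists; exact: h1.
  case: (eqVneq (P (lift ord0 (lift ord0 ord0)) (lift ord0 (lift ord0 ord0))) 0) => h2.
    by move: h; rewrite h0 h1 h2 !add0r => /eqP; rewrite eq_sym oner_eq0.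
  by eexists; exact: h2.
have hPTP : P^T *m P = P by rewrite hPT hPP.
set c := col j P.
have hdd : (c^T *m c) 0 0 = P j j.
  have -> : (c^T *m c) 0 0 = (P^T *m P) j j.
    by rewrite !mxE; apply: eq_bigr => i _; rewrite !mxE.
  by rewrite hPTP.
have hd0 : 0 < P j j.
  rewrite lt_def hj /= -hdd mxE; apply: sumr_ge0 => i _; rewrite !mxE; exact: msq.
have hPc : P *m c = c by rewrite /c colE mulmxA hPP.
have hcP : c^T *m P = c^T by rewrite -{1}hPT -trmx_mul hPc.
have hcc : c^T *m c = (P j j)%:M by rewrite (mx1_scal (c^T *m c)) hdd.
set C := c *m c^T.
have h1 : P *m C = C by rewrite /C mulmxA hPc.
have h2 : C *m P = C by rewrite /C -mulmxA hcP.
have h3 : C *m C = P j j *: C.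
  by rewrite /C mulmxA -(mulmxA c c^T c) hcc mul_mx_scalar -scalemxAl.
have hCT : C^T = C by rewrite /C trmx_mul trmxK.
have hP' : P - (P j j)^-1 *: C = 0.
  apply: trTT0.
  have hT : (P - (P j j)^-1 *: C)^T = P - (P j j)^-1 *: C.
    by rewrite linearB /= linearZ /= hPT hCT.
  have -> : (P - (P j j)^-1 *: C)^T *m (P - (P j j)^-1 *: C) = P - (P j j)^-1 *: C.
    rewrite hT mulmxBl !mulmxBr hPP -!scalemxAr h1.
    rewrite -!scalemxAl h2 h3 !scalerA.
    apply/matrixP => a b; rewrite !mxE; field; exact: hj.
  rewrite linearB /= mxtraceZ htrP /C mxtrace_mulC /mxtrace big_ord1 hdd mulVf //.
  by rewrite subrr.
have hP : P = (P j j)^-1 *: C by apply/eqP; rewrite -subr_eq0 hP'.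
set w := (Num.sqrt (P j j))^-1 *: c.
have hs : Num.sqrt (P j j) ^+ 2 = P j j := sqr_sqrtr (ltW hd0).
have hww : w *m w^T = (P j j)^-1 *: C.
  by rewrite /w /C linearZ /= -scalemxAl -scalemxAr scalerA -invfM -expr2 hs.
have hwu : unit_vec w.
  have ht : w^T = (Num.sqrt (P j j))^-1 *: c^T by apply/matrixP => a b; rewrite !mxE.
  rewrite /unit_vec ht /w -scalemxAl -scalemxAr scalerA mxE hdd.
  by rewrite -invfM -expr2 hs mulVf.
clearbody w.
have hQw : Q = 2 *: (w *m w^T) - 1.
  by rewrite hww -hP hPdef scalerA mulfV // scale1r addrK.
have hAW : A *m (w *m w^T) = (w *m w^T) *m A.
  move: hAQ; rewrite hQw mulmxBr mulmxBl mulmx1 mul1mx -scalemxAr -scalemxAl.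
  by move/addIr/(scalerI n2).
have hww1 : w^T *m w = 1%:M by rewrite (mx1_scal (w^T *m w)) hwu.
exists w; split; last by rewrite Rapi ?unitP.
split=> //; exists ((w^T *m (A *m w)) 0 0).
have Aw : A *m w *m (w^T *m w) = ((w^T *m (A *m w)) 0 0) *: w.
  rewrite mulmxA -(mulmxA A w) hAW -!mulmxA.
  by rewrite {1}(mx1_scal (w^T *m (A *m w))) mul_mx_scalar.
by rewrite -Aw hww1 mulmx1.
Qed.

Lemma item4 A u gam Q th : sym_posdef A -> nrm u = 1 -> 0 < gam -> SO3 Q ->
  (critical (Ufun A u gam) Q th <-> (PsiV A Q /\ th = 0)).
Proof.
move=> hA hn hg hQ; split.
- case=> hgr hth.
  rewrite gradR_val // in hgr.
  have hW : Wm A u Q th = 0.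
    by have := congr1 (mulmx Q^T) hgr; rewrite mulmxA (proj1 hQ) mul1mx mulmx0.
  have hM : psi (Mm A u Q th) = 0 by rewrite -psi_skewpart -/(Wm A u Q th) hW psi0.
  have hp : psi (A *m Tmap u Q th) = 0.
    have hR := Ra_SO3 th hn.
    have := congr1 (mulmx (Ra th u)^T) (item2b A Q th hn).
    by rewrite hM mulmx0 mulmxA (proj1 hR) mul1mx => <-.
  have := duniq hth (item3 A gam Q th hn).
  rewrite hp mulmx0 mxE mulr0 addr0 => /esym/eqP.
  rewrite mulf_eq0 (gt_eqF hg) /= => /eqP th0.
  subst th; split=> //; apply: crit hA hQ _; apply: psi0_sym.
  by move: hp; rewrite /Tmap Ra0 mulmx1.
- case=> hP ->; split.
    rewrite gradR_val //; have hs := psiV_sym (proj1 hA) hP.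
    by rewrite /Wm /Mm Ra0 mul1mx hs subrr scaler0 mulmx0.
  refine (deq _ (item3 A gam Q 0 hn)).
  by rewrite /Tmap Ra0 mulmx1 psi_sym ?(psiV_sym (proj1 hA) hP) // mulmx0 mxE !mulr0 addr0.
Qed.
End G3.

Unset Implicit Arguments.
Theorem lemma2 (R : realType) (A : 'M[R]_3) (u : 'cV[R]_3) (gam : R) :
  sym_posdef A -> unit_vec u -> 0 < gam ->
  let U := Ufun A u gam in
  (* items 1 and 5: along trajectories dR/dt = R omega^x, dtheta/dt = v *)
  (forall (Rt : R -> 'M[R]_3) (th : R -> R) (om : R -> 'cV[R]_3) (v : R -> R),
     SO3 (Rt 0) ->
     (forall t, mx_is_deriv Rt t (Rt t *m crossm (om t))) ->
     (forall t, is_derive t (1 : R) th (v t)) ->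
     forall t,
       let Rat := Ra (th t) u in
       let Tt := Tmap u (Rt t) (th t) in
       mx_is_deriv (fun s => Tmap u (Rt s) (th s)) t
                   (Tt *m crossm ((Rat)^T *m om t + v t *: u))
       /\
       mx_is_deriv (fun s => psi ((Rt s)^T *m gradR U (Rt s) (th s))) t
         ((Rat *m Emat (A *m Tt) *m (Rat)^T) *m om t
          + v t *: (Rat *m Emat (A *m Tt) *m u
                    - crossm (Rat *m psi (A *m Tt)) *m u))) /\
  (* items 2 and 3 *)
  (forall (Q : 'M[R]_3) (th : R), SO3 Q ->
     psi (Q^T *m gradR U Q th) = Ra th u *m psi (A *m Tmap u Q th) /\
     is_derive th (1 : R) (fun s => U Q s)
       (gam * th + 2 * (u^T *m psi (A *m Tmap u Q th)) 0 0)) /\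
  (* item 4: Psi_U = Psi_V x {0}, and (I_3, 0) \in Psi_U *)
  (forall (Q : 'M[R]_3) (th : R), SO3 Q ->
     (critical U Q th <-> (PsiV A Q /\ th = 0))) /\
  critical U 1 0.
Proof.
move=> hA hu hg U.
have hn := unitP hu.
split; [|split; [|split]].
- move=> Rt th om v h0 hd hth t Rat Tt; split.
    exact: item1.
  exact: item5.
- move=> Q th hQ; split; [exact: item2 | exact: item3].
- move=> Q th hQ; exact: item4.
- have h1 : SO3 (1 : 'M[R]_3) by split; [rewrite trmx1 mul1mx | rewrite det1].
  by apply/(@item4 R A u gam 1 0 hA hn hg h1); split=> //; left.
Qed.
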